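(* For a Markov category $\mathcal C$, the following are equivalent: (i) $\mathcal C$ is positive. (ii) $\mathcal C$ satisfies deterministic marginal independence. (iii) For every morphism $q\colon A\to X\otimes E$, $q$ is deterministic in $X$ if and only if its marginal $q_X$ is deterministic.
   Context: A Markov category is a symmetric monoidal category $(\mathcal C,\otimes,I)$ (unitors suppressed) in which every object $X$ carries morphisms $\mathrm{copy}_X\colon X\to X\otimes X$ and $\mathrm{del}_X\colon X\to I$ forming a commutative comonoid, compatible with the monoidal structure ($\mathrm{copy}_{X\otimes Y}$ is $\mathrm{copy}_X\otimes\mathrm{copy}_Y$ followed by swapping the middle factors, $\mathrm{del}_{X\otimes Y}=\mathrm{del}_X\otimes\mathrm{del}_Y$), with $I$ terminal. For $q\colon A\to X\otimes E$, its marginals are $q_X=(\mathrm{id}_X\otimes\mathrm{del}_E)\circ q$ and $q_E=(\mathrm{del}_X\otimes\mathrm{id}_E)\circ q$. A morphism $f\colon A\to X$ is deterministic if $\mathrm{copy}_X\circ f=(f\otimes f)\circ\mathrm{copy}_A$. $\mathcal C$ is positive if for all $f\colon X\to Y$, $g\colon Y\to Z$ with $g\circ f$ deterministic, $(\mathrm{id}_Y\otimes g)\circ\mathrm{copy}_Y\circ f=(f\otimes (g\circ f))\circ\mathrm{copy}_X$. A dilation of $p\colon A\to X$ is a morphism $\pi\colon A\to X\otimes E$ (for some object $E$) with $\pi_X=p$. $\mathcal C$ satisfies deterministic marginal independence if for every deterministic $p\colon A\to X$ and every dilation $\pi\colon A\to X\otimes E$ of $p$, one has $\pi=(p\otimes\pi_E)\circ\mathrm{copy}_A$.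 A morphism $q\colon A\to X\otimes E$ is deterministic in $X$ if $(\mathrm{copy}_X\otimes\mathrm{id}_E)\circ q=(q_X\otimes q)\circ\mathrm{copy}_A$ as morphisms $A\to X\otimes X\otimes E$. *)

(* Defs.v *)
(* The symmetric monoidal structure is NOT assumed strict: associator,
   unitors and symmetry are explicit, with the usual coherence axioms. *)

Set Implicit Arguments.
Unset Strict Implicit.

Record MarkovCat := {
  Ob : Type;
  Hom : Ob -> Ob -> Type;
  comp : forall {A B C : Ob}, Hom B C -> Hom A B -> Hom A C;
  idm : forall (A : Ob), Hom A A;
  comp_assoc : forall A B C D (f : Hom A B) (g : Hom B C) (h : Hom C D),
      comp h (comp g f) = comp (comp h g) f;
  comp_id_l : forall A B (f : Hom A B), comp (idm B) f = f;
  comp_id_r : forall A B (f : Hom A B), comp f (idm A) = f;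

  tens : Ob -> Ob -> Ob;
  unit : Ob;
  tensm : forall {A B C D : Ob}, Hom A B -> Hom C D -> Hom (tens A C) (tens B D);
  tensm_id : forall A B, tensm (idm A) (idm B) = idm (tens A B);
  tensm_comp : forall A B C A' B' C' (f : Hom A B) (g : Hom B C)
      (f' : Hom A' B') (g' : Hom B' C'),
      tensm (comp g f) (comp g' f') = comp (tensm g g') (tensm f f');

  assoc : forall (A B C : Ob), Hom (tens (tens A B) C) (tens A (tens B C));
  assoc_inv : forall (A B C : Ob), Hom (tens A (tens B C)) (tens (tens A B) C);
  assoc_iso1 : forall A B C, comp (assoc_inv A B C) (assoc A B C) = idm _;
  assoc_iso2 : forall A B C, comp (assoc A B C) (assoc_inv A B C) = idm _;
  assoc_nat : forall A A' B B' C C' (f : Hom A A') (g : Hom B B') (h : Hom C C'),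
      comp (assoc A' B' C') (tensm (tensm f g) h)
      = comp (tensm f (tensm g h)) (assoc A B C);
  lunit : forall (A : Ob), Hom (tens unit A) A;
  lunit_inv : forall (A : Ob), Hom A (tens unit A);
  lunit_iso1 : forall A, comp (lunit_inv A) (lunit A) = idm _;
  lunit_iso2 : forall A, comp (lunit A) (lunit_inv A) = idm _;
  lunit_nat : forall A B (f : Hom A B),
      comp (lunit B) (tensm (idm unit) f) = comp f (lunit A);
  runit : forall (A : Ob), Hom (tens A unit) A;
  runit_inv : forall (A : Ob), Hom A (tens A unit);
  runit_iso1 : forall A, comp (runit_inv A) (runit A) = idm _;
  runit_iso2 : forall A, comp (runit A) (runit_inv A) = idm _;
  runit_nat : forall A B (f : Hom A B),
      comp (runit B) (tensm f (idm unit)) = comp f (runit A);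
  swap : forall (A B : Ob), Hom (tens A B) (tens B A);
  swap_nat : forall A A' B B' (f : Hom A A') (g : Hom B B'),
      comp (swap A' B') (tensm f g) = comp (tensm g f) (swap A B);
  swap_invol : forall A B, comp (swap B A) (swap A B) = idm _;
  pentagon : forall A B C D,
      comp (assoc A B (tens C D)) (assoc (tens A B) C D)
      = comp (tensm (idm A) (assoc B C D))
             (comp (assoc A (tens B C) D) (tensm (assoc A B C) (idm D)));
  triangle : forall A B,
      comp (tensm (idm A) (lunit B)) (assoc A unit B)
      = tensm (runit A) (idm B);
  hexagon : forall A B C,
      comp (assoc B C A) (comp (swap A (tens B C)) (assoc A B C))
      = comp (tensm (idm B) (swap A C))
             (comp (assoc B A C) (tensm (swap A B) (idm C)));

  copy : forall (X : Ob), Hom X (tens X X);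
  del : forall (X : Ob), Hom X unit;
  counit_l : forall X,
      comp (lunit X) (comp (tensm (del X) (idm X)) (copy X)) = idm X;
  counit_r : forall X,
      comp (runit X) (comp (tensm (idm X) (del X)) (copy X)) = idm X;
  coassoc : forall X,
      comp (assoc X X X) (comp (tensm (copy X) (idm X)) (copy X))
      = comp (tensm (idm X) (copy X)) (copy X);
  cocomm : forall X, comp (swap X X) (copy X) = copy X;

  copy_tens : forall X Y,
      copy (tens X Y)
      = comp (assoc_inv X Y (tens X Y))
        (comp (tensm (idm X) (assoc Y X Y))
        (comp (tensm (idm X) (tensm (swap X Y) (idm Y)))
        (comp (tensm (idm X) (assoc_inv X Y Y))
        (comp (assoc X X (tens Y Y))
              (tensm (copy X) (copy Y))))));
  del_tens : forall X Y,
      del (tens X Y) = comp (lunit unit) (tensm (del X) (del Y));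

  (* the monoidal unit is terminal (existence is given by del) *)
  unit_terminal : forall A (f g : Hom A unit), f = g
}.

Arguments Hom : clear implicits.
Arguments Ob : clear implicits.
Arguments comp {_ A B C}.
Arguments idm {_}.
Arguments tens {_}.
Arguments unit {_}.
Arguments tensm {_ A B C D}.
Arguments assoc {_}.
Arguments lunit {_}.
Arguments runit {_}.
Arguments swap {_}.
Arguments copy {_}.
Arguments del {_}.

Section MarkovDefs.
Variable C : MarkovCat.

Definition marg1 {A X E : Ob C} (q : Hom C A (tens X E)) : Hom C A X :=
  comp (runit X) (comp (tensm (idm X) (del E)) q).
Definition marg2 {A X E : Ob C} (q : Hom C A (tens X E)) : Hom C A E :=
  comp (lunit E) (comp (tensm (del X) (idm E)) q).

Definition deterministic {A X : Ob C} (f : Hom C A X) : Prop :=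
  comp (copy X) f = comp (tensm f f) (copy A).

Definition positive : Prop :=
  forall (X Y Z : Ob C) (f : Hom C X Y) (g : Hom C Y Z),
    deterministic (comp g f) ->
    comp (tensm (idm Y) g) (comp (copy Y) f)
    = comp (tensm f (comp g f)) (copy X).

Definition dilation {A X E : Ob C} (p : Hom C A X) (pi : Hom C A (tens X E))
  : Prop := marg1 pi = p.

Definition det_marginal_independence : Prop :=
  forall (A X E : Ob C) (p : Hom C A X) (pi : Hom C A (tens X E)),
    deterministic p -> dilation p pi ->
    pi = comp (tensm p (marg2 pi)) (copy A).

(* q : A -> X (x) E is deterministic in X; the two sides live in
   (X (x) X) (x) E and X (x) (X (x) E), identified via the associator. *)
Definition deterministic_in_X {A X E : Ob C} (q : Hom C A (tens X E)) : Prop :=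
  comp (assoc X X E) (comp (tensm (copy X) (idm E)) q)
  = comp (tensm (marg1 q) q) (copy A).

End MarkovDefs.

Arguments positive : clear implicits.
Arguments det_marginal_independence : clear implicits.

(* Main.v *)
Require Import Defs.
From Stdlib Require Import Setoid.
Set Implicit Arguments.
Local Infix "∘" := comp (at level 40, left associativity).
Ltac nrm := repeat rewrite <- comp_assoc; repeat rewrite comp_id_l; repeat rewrite comp_id_r.

Lemma ext {C : MarkovCat} {A B B' D : Ob C} {a : Hom C B D} {b : Hom C A B} {c : Hom C B' D} {d : Hom C A B'} :
  a ∘ b = c ∘ d -> forall (Z : Ob C) (k : Hom C Z A), a ∘ (b ∘ k) = c ∘ (d ∘ k).
Proof. intros H Z k. rewrite !comp_assoc, H. reflexivity. Qed.

Lemma tl {C : MarkovCat} {A B A' B' : Ob C} (f : Hom C A B) (g : Hom C A' B') :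
  tensm f g = tensm f (idm _) ∘ tensm (idm _) g.
Proof. rewrite <- tensm_comp, comp_id_l, comp_id_r. reflexivity. Qed.
Lemma tr {C : MarkovCat} {A B A' B' : Ob C} (f : Hom C A B) (g : Hom C A' B') :
  tensm f g = tensm (idm _) g ∘ tensm f (idm _).
Proof. rewrite <- tensm_comp, comp_id_l, comp_id_r. reflexivity. Qed.

Lemma assoc_inv_nat {C : MarkovCat} {A A' B B' Cc Cc'} (f : Hom C A A') (g : Hom C B B') (h : Hom C Cc Cc') :
  assoc_inv A' B' Cc' ∘ tensm f (tensm g h) = tensm (tensm f g) h ∘ assoc_inv A B Cc.
Proof.
  rewrite <- (comp_id_r (assoc_inv A' B' Cc' ∘ tensm f (tensm g h))).
  rewrite <- (assoc_iso2 A B Cc). nrm.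
  rewrite <- (ext (assoc_nat f g h)).
  rewrite comp_assoc, comp_assoc, assoc_iso1. nrm. reflexivity.
Qed.

Lemma faith_r {C : MarkovCat} {A B : Ob C} (f g : Hom C A B) :
  tensm f (idm unit) = tensm g (idm unit) -> f = g.
Proof.
  intro H. rewrite <- (comp_id_r f), <- (comp_id_r g), <- (runit_iso2 A).
  rewrite !comp_assoc, <- !runit_nat, H. reflexivity.
Qed.
Lemma faith_l {C : MarkovCat} {A B : Ob C} (f g : Hom C A B) :
  tensm (idm unit) f = tensm (idm unit) g -> f = g.
Proof.
  intro H. rewrite <- (comp_id_r f), <- (comp_id_r g), <- (lunit_iso2 A).
  rewrite !comp_assoc, <- !lunit_nat, H. reflexivity.
Qed.
Lemma tcl {C : MarkovCat} {A B D E : Ob C} (g : Hom C B D) (f : Hom C A B) :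
  tensm (g ∘ f) (idm E) = tensm g (idm E) ∘ tensm f (idm E).
Proof. rewrite <- tensm_comp, comp_id_l. reflexivity. Qed.
Lemma tcr {C : MarkovCat} {A B D E : Ob C} (g : Hom C B D) (f : Hom C A B) :
  tensm (idm E) (g ∘ f) = tensm (idm E) g ∘ tensm (idm E) f.
Proof. rewrite <- tensm_comp, comp_id_l. reflexivity. Qed.
Ltac rw H := first [rewrite (ext H) | rewrite H].
Ltac rwb H := first [rewrite <- (ext H) | rewrite <- H].
Lemma canc_assoc {C : MarkovCat} {A B D E : Ob C} (f g : Hom C (tens A (tens B D)) E) :
  f ∘ assoc A B D = g ∘ assoc A B D -> f = g.
Proof.
  intro H. rewrite <- (comp_id_r f), <- (comp_id_r g), <- (assoc_iso2 A B D).
  rewrite !comp_assoc, H. reflexivity.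
Qed.
Lemma canc_assoc_l {C : MarkovCat} {A B D F E : Ob C} (f g : Hom C (tens (tens A (tens B D)) F) E) :
  f ∘ tensm (assoc A B D) (idm F) = g ∘ tensm (assoc A B D) (idm F) -> f = g.
Proof.
  intro H. rewrite <- (comp_id_r f), <- (comp_id_r g), <- (tensm_id _ F), <- (assoc_iso2 A B D),
   <- (comp_id_l (idm F)), tensm_comp.
  rewrite !comp_assoc, H. reflexivity.
Qed.
Lemma kelly_r {C : MarkovCat} (A B : Ob C) :
  tensm (idm A) (runit B) ∘ assoc A B unit = runit (tens A B).
Proof.
  assert (H : assoc A B unit ∘ tensm (runit (tens A B)) (idm unit)
              = assoc A B unit ∘ tensm (tensm (idm A) (runit B) ∘ assoc A B unit) (idm unit)).
  { rewrite <- triangle. rewrite <- (tensm_id A B).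
    rewrite comp_assoc, assoc_nat. nrm.
    rw (pentagon A B unit unit).
    rewrite comp_assoc, <- tensm_comp, comp_id_l, triangle.
    rewrite tcl. rw (assoc_nat (idm A) (runit B) (idm unit)). reflexivity. }
  apply faith_r.
  rewrite <- (comp_id_l (tensm (runit (tens A B)) _)), <- (assoc_iso1 A B unit).
  nrm. rewrite H. rewrite comp_assoc, assoc_iso1, comp_id_l. reflexivity.
Qed.
Lemma kelly_l {C : MarkovCat} (A B : Ob C) :
  lunit (tens A B) ∘ assoc unit A B = tensm (lunit A) (idm B).
Proof.
  apply faith_l. apply canc_assoc. apply canc_assoc_l.
  rewrite tcr. nrm.
  rwb (pentagon unit unit A B).
  rewrite comp_assoc, triangle, <- (tensm_id A B).
  rwb (assoc_nat (runit unit) (idm A) (idm B)).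
  rwb (assoc_nat (idm unit) (lunit A) (idm B)).
  rewrite <- tcl, triangle. reflexivity.
Qed.
Lemma ext1 {C : MarkovCat} {A B D : Ob C} {a : Hom C B D} {b : Hom C A B} {c : Hom C A D} :
  a ∘ b = c -> forall (Z : Ob C) (k : Hom C Z A), a ∘ (b ∘ k) = c ∘ k.
Proof. intros H Z k. rewrite comp_assoc, H. reflexivity. Qed.
Ltac rw1 H := first [rewrite (ext1 H) | rewrite H].
Lemma tcr' {C : MarkovCat} {A B D E : Ob C} (g : Hom C B D) (f : Hom C A B) :
  tensm (idm E) g ∘ tensm (idm E) f = tensm (idm E) (g ∘ f).
Proof. rewrite <- tensm_comp, comp_id_l. reflexivity. Qed.
Lemma tc' {C : MarkovCat} {A B D A' B' D' : Ob C} (g : Hom C B D) (f : Hom C A B) (g' : Hom C B' D') (f' : Hom C A' B') :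
  tensm g g' ∘ tensm f f' = tensm (g ∘ f) (g' ∘ f').
Proof. rewrite <- tensm_comp. reflexivity. Qed.

Lemma kelly_l' {C : MarkovCat} (A B : Ob C) :
  tensm (lunit A) (idm B) ∘ assoc_inv unit A B = lunit (tens A B).
Proof. rewrite <- kelly_l. nrm. rewrite assoc_iso2. nrm. reflexivity. Qed.
Lemma kelly_r' {C : MarkovCat} (A B : Ob C) :
  runit (tens A B) ∘ assoc_inv A B unit = tensm (idm A) (runit B).
Proof. rewrite <- kelly_r. nrm. rewrite assoc_iso2. nrm. reflexivity. Qed.
Lemma dcl {C : MarkovCat} (X : Ob C) : tensm (del X) (idm X) ∘ copy X = lunit_inv X.
Proof. rewrite <- (comp_id_l (tensm (del X) _ ∘ _)), <- lunit_iso1. nrm. rewrite counit_l. nrm. reflexivity. Qed.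
Lemma dcr {C : MarkovCat} (X : Ob C) : tensm (idm X) (del X) ∘ copy X = runit_inv X.
Proof. rewrite <- (comp_id_l (tensm (idm X) (del X) ∘ _)), <- runit_iso1. nrm. rewrite counit_r. nrm. reflexivity. Qed.
Lemma xch {C : MarkovCat} {A B A' B' : Ob C} (f : Hom C A B) (g : Hom C A' B') :
  tensm f (idm _) ∘ tensm (idm _) g = tensm (idm _) g ∘ tensm f (idm _).
Proof. rewrite <- !tensm_comp, !comp_id_l, !comp_id_r. reflexivity. Qed.

Lemma inner {C : MarkovCat} (X E : Ob C) :
  tensm (idm E) (tensm (idm X) (del E)) ∘ assoc E X E ∘ tensm (swap X E) (idm E) ∘ assoc_inv X E E
  = assoc E X unit ∘ tensm (swap X E) (idm unit) ∘ assoc_inv X E unit ∘ tensm (idm X) (tensm (idm E) (del E)).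
Proof.
  rewrite <- assoc_nat. nrm.
  rewrite tensm_id. rwb (xch (swap X E) (del E)). rewrite <- (tensm_id X E). rwb (assoc_inv_nat (idm X) (idm E) (del E)). reflexivity.
Qed.


Lemma projswap {C : MarkovCat} (X E : Ob C) :
  tensm (lunit E ∘ tensm (del X) (idm E)) (runit X ∘ tensm (idm X) (del E)) ∘ copy (tens X E) = swap X E.
Proof.
  rewrite copy_tens, tensm_comp. nrm.
  rwb (assoc_inv_nat (del X) (idm E) (tensm (idm X) (del E))).
  rewrite (tr (del X) (tensm (idm E) (tensm (idm X) (del E)))). nrm.
  rw (xch (del X) (assoc E X E)).
  rw (xch (del X) (tensm (swap X E) (idm E))).
  rw (xch (del X) (assoc_inv X E E)).
  rw1 (tcr' (E:=unit) (tensm (idm E) (tensm (idm X) (del E))) (assoc E X E)).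
  rw1 (tcr' (E:=unit) (tensm (idm E) (tensm (idm X) (del E)) ∘ assoc E X E) (tensm (swap X E) (idm E))).
  rw1 (tcr' (E:=unit) (tensm (idm E) (tensm (idm X) (del E)) ∘ assoc E X E ∘ tensm (swap X E) (idm E)) (assoc_inv X E E)).
  rewrite inner. rewrite !tcr. nrm.
  rewrite <- (tensm_id X (tens E E)).
  rwb (assoc_nat (del X) (idm X) (idm (tens E E))).
  rwb (assoc_nat (idm unit) (idm X) (tensm (idm E) (del E))).
  rw1 (tc' (tensm (idm unit) (idm X)) (tensm (del X) (idm X)) (tensm (idm E) (del E)) (idm (tens E E))).
  rw1 (tc' (tensm (idm unit) (idm X) ∘ tensm (del X) (idm X)) (copy X) (tensm (idm E) (del E) ∘ idm (tens E E)) (copy E)).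
  rewrite tensm_id, comp_id_l, comp_id_r, dcl, dcr.
  rewrite (tl (lunit E) (runit X)). nrm.
  rewrite <- (tensm_id unit E).
  rwb (assoc_inv_nat (idm unit) (idm E) (runit X)).
  rw1 (kelly_l' E X).
  rw (lunit_nat (tensm (idm E) (runit X))).
  rw (lunit_nat (assoc E X unit)).
  rw (lunit_nat (tensm (swap X E) (idm unit))).
  rw (lunit_nat (assoc_inv X E unit)).
  rw1 (kelly_l X (tens E unit)).
  rw1 (kelly_r E X).
  rw (runit_nat (swap X E)).
  rw1 (kelly_r' X E).
  rw1 (tc' (idm X) (lunit X) (runit E) (idm (tens E unit))).
  rw1 (tc' (idm X ∘ lunit X) (lunit_inv X) (runit E ∘ idm (tens E unit)) (runit_inv E)).
  rewrite comp_id_l, comp_id_r, lunit_iso2, runit_iso2, tensm_id, comp_id_r. reflexivity.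
Qed.

Lemma iii_ii (C : MarkovCat) :
  (forall (A X E : Ob C) (q : Hom C A (tens X E)),
        deterministic_in_X q <-> deterministic (marg1 q)) -> det_marginal_independence C.
Proof.
  intros H3 A X E p pi Hp Hdil. unfold dilation in Hdil.
  assert (Hd := proj2 (H3 A X E pi) ltac:(rewrite Hdil; exact Hp)).
  unfold deterministic_in_X in Hd; rewrite Hdil in Hd.
  assert (E1 : tensm (idm X) (lunit E ∘ tensm (del X) (idm E)) ∘ (assoc X X E ∘ (tensm (copy X) (idm E) ∘ pi)) = pi).
  { rewrite tcr. nrm.
    rwb (assoc_nat (idm X) (del X) (idm E)).
    rw1 (triangle X E).
    rw1 (tc' (runit X) (tensm (idm X) (del X)) (idm E) (idm E)).
    rw1 (tc' (runit X ∘ tensm (idm X) (del X)) (copy X) (idm E ∘ idm E) (idm E)).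
    rewrite !comp_id_l. rewrite <- comp_assoc, counit_r, tensm_id, comp_id_l. reflexivity. }
  assert (E2 : tensm (idm X) (lunit E ∘ tensm (del X) (idm E)) ∘ (tensm p pi ∘ copy A) = tensm p (marg2 pi) ∘ copy A).
  { rw1 (tc' (idm X) p (lunit E ∘ tensm (del X) (idm E)) pi). rewrite comp_id_l, <- comp_assoc. reflexivity. }
  rewrite Hd in E1. rewrite <- E2. symmetry. exact E1.
Qed.

Lemma ii_iii (C : MarkovCat) : det_marginal_independence C ->
  (forall (A X E : Ob C) (q : Hom C A (tens X E)),
        deterministic_in_X q <-> deterministic (marg1 q)).
Proof.
  intros Hdmi A X E q; split; intro Hdet.
  - unfold deterministic_in_X in Hdet. unfold deterministic.
    unfold marg1 at 1.
    rwb (runit_nat (copy X)).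
    rw (xch (copy X) (del E)).
    rewrite <- kelly_r, <- (tensm_id X X). nrm.
    rw (assoc_nat (idm X) (idm X) (del E)).
    rewrite Hdet.
    rw1 (tcr' (E:=X) (runit X) (tensm (idm X) (del E))).
    rw1 (tc' (idm X) (marg1 q) (runit X ∘ tensm (idm X) (del E)) q).
    rewrite comp_id_l, <- comp_assoc. reflexivity.
  - assert (Hq := Hdmi A X E (marg1 q) q Hdet eq_refl).
    unfold deterministic_in_X.
    set (p := marg1 q) in *. set (e := marg2 q) in *.
    rewrite Hq.
    rw1 (tc' (copy X) p (idm E) e). unfold deterministic in Hdet. rewrite Hdet, comp_id_l.
    rewrite <- (comp_id_r e) at 1. rewrite tensm_comp. nrm.
    rewrite (ext (assoc_nat p p e)).
    rw (coassoc A).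
    rewrite comp_assoc, tc', comp_id_r. reflexivity.
Qed.

Lemma ii_i (C : MarkovCat) : det_marginal_independence C -> positive C.
Proof.
  intros Hdmi X Y Z f g Hdet.
  assert (Hm1 : marg1 (tensm g (idm Y) ∘ (copy Y ∘ f)) = g ∘ f).
  { unfold marg1. rwb (xch g (del Y)). rw (runit_nat g).
    rewrite (comp_assoc f (copy Y) (tensm (idm Y) (del Y))), (comp_assoc f _ (runit Y)), counit_r, comp_id_l. reflexivity. }
  assert (Hm2 : marg2 (tensm g (idm Y) ∘ (copy Y ∘ f)) = f).
  { unfold marg2. rw1 (tc' (del Z) g (idm Y) (idm Y)).
    rewrite (unit_terminal (del Z ∘ g) (del Y)), comp_id_l.
    rewrite (comp_assoc f (copy Y) (tensm (del Y) (idm Y))), (comp_assoc f _ (lunit Y)), counit_l, comp_id_l. reflexivity. }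
  assert (H := Hdmi X Z Y (g ∘ f) _ Hdet Hm1). rewrite Hm2 in H.
  rewrite <- (cocomm Y). nrm.
  rwb (swap_nat g (idm Y)). rewrite H. nrm.
  rw (swap_nat (g ∘ f) f). rewrite cocomm. reflexivity.
Qed.

Lemma i_ii (C : MarkovCat) : positive C -> det_marginal_independence C.
Proof.
  intros Hpos A X E p pi Hp Hdil. unfold dilation, marg1 in Hdil.
  assert (Hg : (runit X ∘ tensm (idm X) (del E)) ∘ pi = p) by (rewrite <- comp_assoc; exact Hdil).
  assert (H := Hpos A (tens X E) X pi (runit X ∘ tensm (idm X) (del E)) ltac:(rewrite Hg; exact Hp)).
  rewrite Hg in H.
  assert (H2 : swap X E ∘ pi = tensm (marg2 pi) p ∘ copy A).
  { rewrite <- projswap.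
    rewrite (tl (lunit E ∘ tensm (del X) (idm E)) (runit X ∘ tensm (idm X) (del E))).
    rewrite <- comp_assoc, <- comp_assoc, H.
    rw1 (tc' (lunit E ∘ tensm (del X) (idm E)) pi (idm X) p).
    rewrite comp_id_l, <- comp_assoc. reflexivity. }
  transitivity (swap E X ∘ (swap X E ∘ pi)).
  { rewrite comp_assoc, swap_invol, comp_id_l. reflexivity. }
  rewrite H2.
  rw (swap_nat (marg2 pi) p). rewrite cocomm. reflexivity.
Qed.

Theorem theorem2p8 (C : MarkovCat) :
  (positive C <-> det_marginal_independence C) /\
  (det_marginal_independence C <->
     (forall (A X E : Ob C) (q : Hom C A (tens X E)),
        deterministic_in_X q <-> deterministic (marg1 q))).
Proof.
  split; split.
  - apply i_ii.
  - apply ii_i.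
  - apply ii_iii.
  - apply iii_ii.
Qed.
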